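(* Let $(M,d)$ be a metric space in which any two points $A,B\in M$ are joined by a unique metric segment $[A,B]$. Then the following two conditions are equivalent. Condition (A): for any three distinct points $A,B,C\in M$ there exists a unique $O\in M$ such that $\{X,Y\}\subset\mathcal C_d(Z,O)$ for all distinct $X,Y,Z\in\{A,B,C\}$. Condition (B): for any three distinct points $A,B,C\in M$ there exists $O\in M$ such that $[A,B]\cap[B,C]\cap[A,C]=\{O\}$.
   Context: For a metric space $(M,d)$ and $A,B\in M$, the metric segment is $[A,B]=\{X\in M:\ d(A,X)+d(X,B)=d(A,B)<+\infty\}$. For $A,B\in M$, $\mathcal C_d(A,B)=\{X\in M:\ d(X,A)=d(X,B)+d(A,B)<+\infty\}$. *)

(* Defs.v *)
From mathcomp Require Import all_boot all_order all_algebra.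
From mathcomp Require Import all_classical all_reals.
Set Implicit Arguments. Unset Strict Implicit. Unset Printing Implicit Defensive.
Import Order.TTheory GRing.Theory Num.Theory.
Local Open Scope classical_set_scope.
Local Open Scope ring_scope.

Section Defs.
Variables (R : realType) (M : Type) (d : M -> M -> \bar R).

Definition is_emetric : Prop :=
  [/\ (forall x y, (0 <= d x y)%E),
      (forall x y, d x y = 0%E <-> x = y),
      (forall x y, d x y = d y x) &
      (forall x y z, (d x z <= d x y + d y z)%E)].

Definition segment (A B : M) : set M :=
  [set X | (d A X + d X B = d A B)%E /\ (d A B < +oo)%E].

Definition Cd (A B : M) : set M :=
  [set X | (d X A = d X B + d A B)%E /\ (d X A < +oo)%E].

Definition geodesic_image (A B : M) (S : set M) : Prop :=
  exists r : R, d A B = r%:E /\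
    exists g : R -> M, [/\ g 0 = A, g r = B,
      (forall s t, 0 <= s <= r -> 0 <= t <= r -> d (g s) (g t) = `|s - t|%:E) &
      S = [set g t | t in [set t | 0 <= t <= r]]].

Definition uniquely_joined : Prop :=
  forall A B : M, exists! S : set M, geodesic_image A B S.

Definition condA : Prop :=
  forall A B C : M, A <> B -> B <> C -> A <> C ->
    exists! O : M, forall X Y Z : M,
      (X = A \/ X = B \/ X = C) -> (Y = A \/ Y = B \/ Y = C) ->
      (Z = A \/ Z = B \/ Z = C) -> X <> Y -> Y <> Z -> X <> Z ->
      Cd Z O X /\ Cd Z O Y.

Definition condB : Prop :=
  forall A B C : M, A <> B -> B <> C -> A <> C ->
    exists O : M, segment A B `&` segment B C `&` segment A C = [set O].

End Defs.

(* Main.v *)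
Require Import Defs.
From mathcomp Require Import all_boot all_order all_algebra.
From mathcomp Require Import all_classical all_reals.
Import Order.TTheory GRing.Theory Num.Theory.
Local Open Scope classical_set_scope.
Local Open Scope ring_scope.

Section H.
Variables (R : realType) (M : Type) (d : M -> M -> \bar R).
Hypothesis dsym : forall x y, d x y = d y x.

Lemma seg_sym U V O : segment d U V O -> segment d V U O.
Proof.
by rewrite /segment /= => -[h1 h2]; rewrite dsym addeC (dsym O) (dsym V) h1.
Qed.

Lemma seg_Cd Z X O : segment d Z X O <-> Cd d Z O X.
Proof.
rewrite /segment /Cd /=; split => -[h1 h2].
  by split; rewrite (dsym X Z) // -h1 addeC (dsym O X).
by split; rewrite (dsym Z X) // h1 addeC (dsym X O).
Qed.

Lemma key A B C O : A <> B -> B <> C -> A <> C ->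
  ((forall X Y Z : M,
      (X = A \/ X = B \/ X = C) -> (Y = A \/ Y = B \/ Y = C) ->
      (Z = A \/ Z = B \/ Z = C) -> X <> Y -> Y <> Z -> X <> Z ->
      Cd d Z O X /\ Cd d Z O Y) <->
   (segment d A B `&` segment d B C `&` segment d A C) O).
Proof.
move=> hAB hBC hAC; split.
  move=> P; split; [split|].
  - have [h _] := P B C A (or_intror (or_introl erefl)) (or_intror (or_intror erefl))
       (or_introl erefl) hBC (nesym hAC) (nesym hAB).
    by apply/seg_Cd.
  - have [h _] := P C A B (or_intror (or_intror erefl)) (or_introl erefl)
       (or_intror (or_introl erefl)) (nesym hAC) hAB (nesym hBC).
    by apply/seg_Cd.
  - have [h _] := P C B A (or_intror (or_intror erefl)) (or_intror (or_introl erefl))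
       (or_introl erefl) (nesym hBC) (nesym hAB) (nesym hAC).
    by apply/seg_Cd.
move=> [[sAB sBC] sAC].
have pair : forall U V, (U = A \/ U = B \/ U = C) -> (V = A \/ V = B \/ V = C) ->
    U <> V -> segment d U V O.
  move=> U V [->|[->|->]] [->|[->|->]] //; try (by move=> h; case: h);
  move=> _; by [|apply: seg_sym].
move=> X Y Z hX hY hZ hXY hYZ hXZ; split; apply/seg_Cd; apply: pair => //.
  by apply: nesym.
by apply: nesym.
Qed.
End H.

Theorem lemma2p1 (R : realType) (M : Type) (d : M -> M -> \bar R) :
  is_emetric d -> uniquely_joined d -> (condA d <-> condB d).
Proof.
move=> [_ _ dsym _] _; rewrite /condA /condB; split.
  move=> hA A B C hAB hBC hAC.
  have [O [hO uO]] := hA A B C hAB hBC hAC.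
  exists O; apply/seteqP; split => X.
    move=> hX; rewrite /=; symmetry; apply: uO.
    by apply/(@key _ _ _ dsym _ _ _ _ hAB hBC hAC).
  by move=> /= ->; apply/(@key _ _ _ dsym _ _ _ _ hAB hBC hAC).
move=> hB A B C hAB hBC hAC.
have [O hO] := hB A B C hAB hBC hAC.
exists O; split.
  by apply/(@key _ _ _ dsym _ _ _ _ hAB hBC hAC); rewrite hO.
move=> X /(@key _ _ _ dsym _ _ _ _ hAB hBC hAC); rewrite hO => ->.
by [].
Qed.
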